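(* Let $k$ be a positive integer and $G_1,\dots,G_m$ finite subgraphs of $\mathsf{Path}_{\mathbb Z}$ with $G_1\cup\dots\cup G_m=\mathsf{Path}_k$ and $\vec\Delta(G_1,\dots,G_m)=1$. Then there exists a shift permutation $\sigma$ of $[m]$ such that \[\vec\lambda(G_{\sigma(1)},\dots,G_{\sigma(m)})\ge\frac{k}{8}-\frac{\max\{\lambda(G_1),\dots,\lambda(G_m)\}}{2}\] and \[\vec\Delta(G_{\tilde\sigma_j(1)},\dots,G_{\tilde\sigma_j(m)})\ge\frac{\vec\Delta(G_1,\dots,G_m)}{2}\quad\text{for all }j\in[m].\]
   Context: Graphs are finite simple graphs without isolated vertices; $\emptyset$ is the empty graph. $\mathsf{Path}_{\mathbb Z}$ has vertex set $\mathbb Z$ and edges $\{i-1,i\}$; $\mathsf{Path}_k$ has vertices $0,\dots,k$ and edges $\{i-1,i\}$, $1\le i\le k$. $\Delta(G)$ = number of connected components; $\lambda(G)$ = maximum number of edges in a component ($0$ for $\emptyset$); $G\ominus F$ = union of components of $G$ sharing no vertex with $F$. With $H_l=G_l\ominus(G_1\cup\dots\cup G_{l-1})$: $\vec\Delta(G_1,\dots,G_m)=\sum_l\Delta(H_l)$, $\vec\lambda(G_1,\dots,G_m)=\sum_l\lambda(H_l)$ (applied to reordered sequences accordingly). Shift permutation: a permutation $\sigma$ of $[m]$ with $\sigma(j)\ge j-1$ for all $j$. For $I\subseteq[m]$ with $m\in I$, $I=\{i_1<\dots<i_p\}$, $i_0:=0$, let $\sigma_I(j)=i_h$ if $j=i_{h-1}+1$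 for some $h$, and $\sigma_I(j)=j-1$ otherwise; every shift permutation is $\sigma_I$ for exactly one such $I$. For $\sigma=\sigma_I$ and $j\in[m]$, $\tilde\sigma_j:=\sigma_{\tilde I_j}$ with $\tilde I_j=I\cup[i_{h-1}]$ if $j=i_h\in I$ and $\tilde I_j=I\cup[j-1]$ if $j\notin I$. *)

(* Defs.v *)
From HB Require Import structures.
From mathcomp Require Import all_boot all_order all_algebra.
From mathcomp Require Import finmap.
Set Implicit Arguments. Unset Strict Implicit. Unset Printing Implicit Defensive.
Import Order.TTheory GRing.Theory Num.Theory.
Local Open Scope ring_scope.


(* A finite subgraph (without isolated vertices) of Path_Z is determined by
   its edge set; the edge {i-1,i} is labelled by the integer i.  The vertex
   set is the set of endpoints of the edges. *)
Definition pgraph := {fset int}.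

Definition pvert (G : pgraph) (v : int) : bool := (v \in G) || (v + 1 \in G).

Definition irange (a b : int) : seq int :=
  [seq a + (n%:Z) | n <- iota 0 (absz (b - a)).+1].

Definition is_comp (G : pgraph) (a b : int) : bool :=
  [&& a <= b, all (fun x => x \in G) (irange a b),
      a - 1 \notin G & b + 1 \notin G].

Definition epairs (G : pgraph) : seq (int * int) :=
  [seq (a, b) | a <- enum_fset G, b <- enum_fset G].

Definition comps (G : pgraph) : seq (int * int) :=
  [seq p <- epairs G | is_comp G p.1 p.2].

Definition comp_size (p : int * int) : nat := (absz (p.2 - p.1)).+1.

Definition Delta (G : pgraph) : nat := size (comps G).

Definition lambda (G : pgraph) : nat := \max_(p <- comps G) comp_size p.

Definition shares (F : pgraph) (a b : int) : bool :=
  has (fun v => pvert F v) (irange (a - 1) b).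

Definition ominus (G F : pgraph) : pgraph :=
  ([fset e in G | has (fun p => (p.1 <= e <= p.2) && ~~ shares F p.1 p.2)
                     (comps G)])%fset.

Definition gunion (s : seq pgraph) : pgraph := (\big[fsetU/fset0]_(G <- s) G)%fset.

(* H_l = G_l ominus (G_1 u ... u G_{l-1}), l = 1..m  (0-based in Coq) *)
Definition Hs (s : seq pgraph) : seq pgraph :=
  [seq ominus (nth fset0 s l) (gunion (take l s)) | l <- iota 0 (size s)].

Definition vecDelta (s : seq pgraph) : nat := \sum_(H <- Hs s) Delta H.
Definition vecLambda (s : seq pgraph) : nat := \sum_(H <- Hs s) lambda H.

Definition PathG (k : nat) : pgraph := [fset (i%:Z) | i in iota 1 k]%fset.

Definition irangeN (n : nat) : seq nat := iota 1 n.

(* reordering (G_{sigma(1)}, ..., G_{sigma(m)}) of s = (G_1,...,G_m), with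
   sigma acting on 1-based indices *)
Definition reorder (s : seq pgraph) (sigma : nat -> nat) : seq pgraph :=
  [seq nth fset0 s (sigma j).-1 | j <- irangeN (size s)].

Definition is_shift_perm (m : nat) (sigma : nat -> nat) : Prop :=
  [/\ {in irangeN m, forall j, sigma j \in irangeN m},
      {in irangeN m &, injective sigma} &
      {in irangeN m, forall j, (j.-1 <= sigma j)%N}].

Definition valid_I (m : nat) (I : seq nat) : Prop :=
  {subset I <= irangeN m} /\ m \in I.

(* sigma_I : with I = {i_1 < ... < i_p}, i_0 = 0,
   sigma_I(j) = i_h if j = i_{h-1}+1, and j-1 otherwise *)
Definition sigmaI (I : seq nat) (j : nat) : nat :=
  let s := sort leq (undup I) in
  let t := 0%N :: s in
  let h := find (fun x => x.+1 == j) t in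
  if (h < size s)%N then nth 0%N s h else j.-1.

(* tilde I_j = I u [i_{h-1}] if j = i_h in I, and I u [j-1] otherwise *)
Definition tildeI (I : seq nat) (j : nat) : seq nat :=
  let s := sort leq (undup I) in
  if j \in I then I ++ irangeN (nth 0%N (0%N :: s) (index j s))
  else I ++ irangeN j.-1.

(* Main.v *)
Require Import Defs.
From HB Require Import structures.
From mathcomp Require Import all_boot all_order all_algebra.
From mathcomp Require Import finmap.
From mathcomp Require Import zify lra.
Import Order.TTheory GRing.Theory Num.Theory.

Lemma nth_lt (t : seq nat) i j : sorted ltn t -> (i < size t)%N -> (j < size t)%N ->
  (nth 0%N t i < nth 0%N t j)%N = (i < j)%N.
Proof.
move=> ht hi hj; apply/idP/idP => h.
- rewrite ltnNge; apply/negP => hji.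
  move: ht; rewrite ltn_sorted_uniq_leq => /andP[_ hs].
  have := sorted_leq_nth leq_trans leqnn 0%N hs j i hj hi hji; lia.
- exact: (sorted_ltn_nth ltn_trans 0%N ht i j hi hj h).
Qed.

Arguments nth_lt {t i j}.

Section Sig.
Variables (m : nat) (s : seq nat).
Hypotheses (hs : sorted ltn s) (hsub : forall x, x \in s -> (1 <= x <= m)%N) (hm : m \in s).
Let t := 0%N :: s.
Definition sig (j : nat) : nat :=
  if (index j.-1 t < size s)%N then nth 0%N s (index j.-1 t) else j.-1.

Lemma ht : sorted ltn t.
Proof.
rewrite /t /=; case: s hs hsub => [|x s'] //= -> h; rewrite andbT.
by have := h x; rewrite inE eqxx /= => /(_ isT) /andP[].
Qed.

Lemma tuniq : uniq t.
Proof. by have := ht; rewrite ltn_sorted_uniq_leq => /andP[]. Qed.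

Lemma s_ne : (0 < size s)%N.
Proof. by move: hm; case: (s). Qed.

Lemma sig1 j : (1 <= j <= m)%N ->
  [/\ (1 <= sig j <= m)%N, (j.-1 <= sig j)%N &
      forall n, n \in t -> (j <= n)%N -> (sig j <= n)%N].
Proof.
move=> hj; rewrite /sig; set h := index j.-1 t.
case: ifP => hh.
- have hjt : j.-1 \in t by rewrite -index_mem /= ltnS ltnW.
  have e1 : nth 0%N t h = j.-1 by rewrite nth_index.
  have e2 : nth 0%N s h = nth 0%N t h.+1 by [].
  have hlt : (nth 0%N t h < nth 0%N t h.+1)%N.
    by rewrite nth_lt ?ht //= ltnS // ltnW.
  have hin : nth 0%N s h \in s by rewrite mem_nth.
  have := hsub _ hin => /andP[h1 h2].
  split; [by rewrite h1 h2| lia|].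
  move=> n hn hjn.
  have hg : (index n t < size t)%N by rewrite index_mem.
  have en : nth 0%N t (index n t) = n by rewrite nth_index.
  have : (h < index n t)%N.
    have hh' : (h < size t)%N by rewrite /= ltnS ltnW.
    by rewrite -(nth_lt ht hh' hg) e1 en; lia.
  move=> hlt2; rewrite e2.
  case: (ltngtP h.+1 (index n t)) => [hl|hl|e]; last by rewrite e en.
  + have hlt3 : (nth 0%N t h.+1 < nth 0%N t (index n t))%N.
      by rewrite (nth_lt ht) //= ltnS.
    by rewrite en in hlt3; apply: ltnW.
  + lia.
- split; last by move=> n _ hjn; lia.
  + move: hh; rewrite /h; clear h.
    case: j hj => [|[|j]] //= hj; last by lia.
    by rewrite /t /= s_ne.
  + lia.
Qed.

Lemma sig3 h : (h < size s)%N -> sig (nth 0%N t h).+1 = nth 0%N s h.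
Proof.
move=> hh; rewrite /sig -pred_Sn index_uniq ?tuniq ?hh //.
by rewrite /t /= ltnS ltnW.
Qed.

Lemma sig2 n u : n \in t -> (1 <= u <= n)%N -> exists j, (1 <= j <= n)%N /\ sig j = u.
Proof.
move=> hn hu.
case hus: (u \in s).
- set g := index u s.
  have hg : (g < size s)%N by rewrite index_mem.
  exists (nth 0%N t g).+1; split.
  + apply/andP; split => //.
    have : (nth 0%N t g < nth 0%N t g.+1)%N by rewrite nth_lt ?ht //= ltnS ltnW.
    have -> : nth 0%N t g.+1 = u by rewrite /= nth_index.
    have hnt : (index n t < size t)%N by rewrite index_mem.
    have en : nth 0%N t (index n t) = n by rewrite nth_index.
    lia.
  + by rewrite sig3 // nth_index.
- exists u.+1; split.
  + have : u != n.
      by apply/eqP => e; move: hn; rewrite -e /t inE hus orbF => /eqP; lia.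
    lia.
  + rewrite /sig -pred_Sn.
    have hut : u \notin t by rewrite /t inE hus orbF; apply/eqP; lia.
    have -> : index u t = size t.
      by apply/eqP; rewrite eqn_leq index_size andTb leqNgt index_mem.
    by rewrite /t /= ltnNge leqnSn.
Qed.

End Sig.

Local Open Scope ring_scope.

Lemma mem_irange (a b x : int) : a <= b -> (x \in irange a b) = (a <= x <= b).
Proof.
move=> hab; rewrite /irange; apply/mapP/idP.
- by move=> [n]; rewrite mem_iota => /andP[_ h] ->; lia.
- move=> h; exists (absz (x - a)); last by lia.
  rewrite mem_iota; lia.
Qed.

Lemma is_compP (G : pgraph) a b :
  is_comp G a b <->
  [/\ a <= b, (forall x, a <= x <= b -> x \in G), a - 1 \notin G & b + 1 \notin G].
Proof.
rewrite /is_comp; split.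
- case/and4P=> hab /allP hall h1 h2; split=> // x hx; apply: hall.
  by rewrite mem_irange.
- case=> hab hall h1 h2; apply/and4P; split=> //; apply/allP => x.
  by rewrite mem_irange // => /hall.
Qed.

Lemma noshares (F : pgraph) a b : a <= b ->
  (forall e, e \in F -> (e < a - 1) || (b + 1 < e)) -> ~~ shares F a b.
Proof.
move=> hab hF; apply/hasP => -[v]; rewrite mem_irange; last by lia.
move=> hv; rewrite /pvert => /orP[] /hF; lia.
Qed.

Lemma sharesE (F : pgraph) a b : a <= b -> shares F a b ->
  exists2 e, e \in F & (a - 1 <= e <= b + 1).
Proof.
move=> hab /hasP[v]; rewrite mem_irange; last by lia.
move=> hv; rewrite /pvert => /orP[] he.
- by exists v => //; lia.
- by exists (v + 1) => //; lia.
Qed.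

Lemma mem_comps (G : pgraph) p : (p \in comps G) = is_comp G p.1 p.2.
Proof.
rewrite /comps mem_filter; case hc: (is_comp G p.1 p.2) => //=.
have /is_compP[hab hall _ _] := hc.
apply/allpairsP; exists (p.1, p.2) => /=; split.
- by apply: hall; lia.
- by apply: hall; lia.
- by case: p {hc hab hall}.
Qed.

Lemma lambda_ge (G : pgraph) p : p \in comps G -> (comp_size p <= lambda G)%N.
Proof. by move=> hp; apply: (leq_bigmax_seq p hp). Qed.

Lemma Delta_ge (G : pgraph) p : p \in comps G -> (0 < Delta G)%N.
Proof. by rewrite /Delta; case: (comps G). Qed.

Lemma comp_ominus (G F : pgraph) a b :
  is_comp G a b -> ~~ shares F a b -> (a, b) \in comps (ominus G F).
Proof.
move=> hc hs; have /is_compP[hab hall h1 h2] := hc.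
rewrite mem_comps /=; apply/is_compP; split => //.
- move=> x hx; rewrite /ominus !inE /=; rewrite hall //=.
  by apply/hasP; exists (a, b); rewrite ?mem_comps //= hx.
- by rewrite /ominus !inE negb_and h1.
- by rewrite /ominus !inE negb_and h2.
Qed.

Lemma ext_dir (G : pgraph) (e d : int) : e \in G -> (d = 1 \/ d = -1) ->
  exists n : nat, (e + d * (n%:Z + 1) \notin G) /\
     forall i : nat, (i <= n)%N -> e + d * i%:Z \in G.
Proof.
move=> he hd.
have hex : exists n : nat, e + d * (n%:Z + 1) \notin G.
  set N := size (enum_fset G).
  case hh: (has (fun n : nat => e + d * (n%:Z + 1) \notin G) (iota 0 N.+1)).
    by case/hasP: hh => n _ hn; exists n.
  move/hasPn: hh => hall; exfalso.
  have hu : uniq [seq e + d * (n%:Z + 1) | n <- iota 0 N.+1].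
    rewrite map_inj_in_uniq ?iota_uniq // => x y _ _ /eqP.
    case: hd => -> /eqP; lia.
  have := uniq_leq_size hu; rewrite size_map size_iota => hs.
  suff : (N.+1 <= N)%N by rewrite ltnn.
  apply: hs => x /mapP[n hn ->].
  by have := hall n hn; rewrite negbK.
exists (ex_minn hex); case: ex_minnP => n hn hmin; split => // i hi.
case: i hi => [|i] hi; first by rewrite mulr0 addr0.
have : e + d * (i%:Z + 1) \in G.
  apply/negPn/negP => /hmin; lia.
by have -> : (i.+1)%:Z = i%:Z + 1 by lia.
Qed.

Lemma comp_exists (G : pgraph) e : e \in G ->
  exists a b, is_comp G a b /\ a <= e <= b.
Proof.
move=> he.
have [n [hn1 hn2]] := @ext_dir G e 1 he (or_introl erefl).
have [n' [hn1' hn2']] := @ext_dir G e (-1) he (or_intror erefl).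
exists (e - n'%:Z), (e + n%:Z); split; last by lia.
apply/is_compP; split.
- lia.
- move=> x hx; case: (lerP e x) => hxe.
  + have := hn2 (absz (x - e)) ltac:(lia).
    by rewrite mul1r; have -> : e + (absz (x - e))%:Z = x by lia.
  + have := hn2' (absz (e - x)) ltac:(lia).
    by have -> : e + (-1) * (absz (e - x))%:Z = x by lia.
- by have -> : e - n'%:Z - 1 = e + (-1) * (n'%:Z + 1) by lia.
- by have -> : e + n%:Z + 1 = e + 1 * (n%:Z + 1) by lia.
Qed.

Lemma split_last (T : eqType) (q : pred T) (s : seq T) : has q s ->
  exists pre z post, [/\ s = pre ++ z :: post, q z & ~~ has q post].
Proof.
elim: s => [|y s IH] //= /orP[hy|hs].
- case hs: (has q s).
  + have [pre [z [post [-> hz hp]]]] := IH hs.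
    by exists (y :: pre), z, post.
  + by exists [::], y, s; rewrite hs.
- have [pre [z [post [-> hz hp]]]] := IH hs.
  by exists (y :: pre), z, post.
Qed.

Section Cover.
Variables (P Y : nat -> int).
Definition Rc (a b : nat) : bool := (a < b)%N && (P b <= Y a + 1).
Definition R0 (a b : nat) : bool := (a < b)%N && (Y a + 2 <= P b).
Definition gsum (C : seq nat) : int := \sum_(c <- C) (Y c - P c + 1).

Lemma cover2 x s : path Rc x s ->
  exists A B, [/\ sorted R0 (x :: A), sorted R0 B, {subset A <= s}, {subset B <= s}
    & Y (last x s) - P x + 1 <= gsum (x :: A) + gsum B].
Proof.
have [n] := ubnP (size s); elim: n x s => // n IH x s hn hp.
case: s hn hp => [|y s1] hn hp.
  by exists [::], [::]; split => //=; rewrite /gsum big_cons !big_nil; lia.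
set q := fun b : nat => P b <= Y x + 1.
have hq : has q (y :: s1) by rewrite /= /q; move: hp => /= /andP[/andP[_ ->]].
have [pre [z [post [hs hz hpost]]]] := split_last _ _ _ hq.
have hsub : path Rc z post.
  by move: hp; rewrite hs cat_path /= => /andP[_ /andP[]].
have hlt : all (fun b => (x < b)%N) (y :: s1).
  by apply: (order_path_min ltn_trans); apply: sub_path hp => a b /andP[].
have hsz : (size post < n)%N by move: hn; rewrite hs size_cat /=; lia.
have [A [B [h1 h2 h3 h4 h5]]] := IH z post hsz hsub.
exists B, (z :: A); split => //.
- clear h5; case: B h2 h4 => [|b B] //= h2 h4; rewrite h2 andbT /R0.
  have hb : b \in post by apply: h4; rewrite inE eqxx.
  have hbs : b \in y :: s1 by rewrite hs mem_cat inE hb !orbT.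
  rewrite (allP hlt _ hbs) /=.
  move/hasPn: hpost => /(_ b hb); rewrite /q; lia.
- by move=> c hc; rewrite hs mem_cat inE (h4 _ hc) !orbT.
- move=> c; rewrite inE => /orP[/eqP ->|hc]; rewrite hs mem_cat inE ?eqxx ?orbT //.
  by rewrite (h3 _ hc) !orbT.
- have -> : last x (y :: s1) = @last nat z post by rewrite hs last_cat.
  have -> : gsum (x :: B) = Y x - P x + 1 + gsum B by rewrite /gsum big_cons.
  have -> : gsum (z :: A) = Y z - P z + 1 + gsum A by rewrite /gsum big_cons.
  move: h5; rewrite [gsum (z :: A)]/gsum big_cons -/(gsum A) => h5.
  move: hz; rewrite /q => hz. lia.
Qed.

Lemma icover x s : path Rc x s ->
  exists C, [/\ sorted R0 C, {subset C <= x :: s}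
    & Y (last x s) - P x + 1 <= 2 * gsum C].
Proof.
move=> hp; have [A [B [h1 h2 h3 h4 h5]]] := @cover2 x s hp.
case: (lerP (gsum B) (gsum (x :: A))) => hAB.
- exists (x :: A); split => //; last by lia.
  by move=> c; rewrite !inE => /orP[->|/h3 ->]; rewrite ?orbT.
- exists B; split => //; last by lia.
  by move=> c /h4 hc; rewrite inE hc orbT.
Qed.
End Cover.

Lemma in_gunion (L : seq {fset int}) e : (e \in gunion L) = has (fun G : {fset int} => e \in G) L.
Proof.
elim: L => [|G L IH]; first by rewrite /gunion big_nil inE.
by rewrite /gunion big_cons inE -/(gunion L) IH.
Qed.

Lemma sum_ge_term (r : seq nat) (F : nat -> nat) x : x \in r -> uniq r ->
  (F x <= \sum_(i <- r) F i)%N.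
Proof. by move=> hx hu; rewrite (bigD1_seq x) //=; exact: leq_addr. Qed.

Lemma sum_sub (L T : seq nat) (F : nat -> nat) : uniq L -> {subset L <= T} -> uniq T ->
  (\sum_(i <- L) F i <= \sum_(i <- T) F i)%N.
Proof.
move=> hL hsub hT; rewrite [X in (_ <= X)%N](bigID (fun i => i \in L)) /=.
have -> : \sum_(i <- T | i \in L) F i = \sum_(i <- L) F i.
  rewrite -big_filter; apply: perm_big; apply: uniq_perm; rewrite ?filter_uniq //.
  by move=> i; rewrite mem_filter; case hi: (i \in L); rewrite ?(hsub _ hi).
exact: leq_addr.
Qed.

Lemma uniq_map_inj (T1 T2 : eqType) (f : T1 -> T2) (s : seq T1) :
  uniq (map f s) -> {in s &, injective f}.
Proof.
elim: s => //= a s IH /andP[hna hu] x y; rewrite !inE.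
case/orP=> [/eqP->|hx]; case/orP=> [/eqP->|hy] // e.
- by move: hna; rewrite e map_f.
- by move: hna; rewrite -e map_f.
- exact: IH.
Qed.

Lemma vecDeltaE (L : seq {fset int}) : vecDelta L =
  \sum_(l <- iota 0 (size L)) Delta (ominus (nth fset0 L l) (gunion (take l L))).
Proof. by rewrite /vecDelta /Hs big_map. Qed.

Lemma ominus0_comp (G : pgraph) a b : is_comp G a b -> (a, b) \in comps (ominus G fset0).
Proof.
move=> hc; apply: comp_ominus => //; apply: noshares => [|e]; last by rewrite inE.
by case/is_compP: hc.
Qed.

Lemma vecDelta_pos (L : seq {fset int}) e : e \in gunion L -> (0 < vecDelta L)%N.
Proof.
move=> he.
have hex : exists p, (p < size L)%N && (nth fset0 L p != fset0).
  move: he; rewrite in_gunion => /seq.hasP[G hG heG].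
  exists (index G L); rewrite index_mem hG nth_index //=.
  by apply/fset0Pn; exists e.
case: (ex_minnP hex) => p /andP[hp hne] hmin.
have hU : gunion (take p L) = fset0.
  apply/fsetP => x; rewrite in_gunion inE; apply/seq.hasP => -[G hG hxG].
  have hpL : (p <= size L)%N by apply: ltnW.
  have hi : (index G (take p L) < p)%N.
    by rewrite -{2}(size_takel hpL) index_mem.
  have eG : G = nth fset0 L (index G (take p L)) by rewrite -(nth_take _ hi) nth_index.
  have hG0 : G != fset0 by apply/fset0Pn; exists x.
  have := hmin (index G (take p L)); rewrite (ltn_trans hi hp) -eG hG0 /= => /(_ isT).
  by rewrite leqNgt hi.
have [x hx] : exists x, x \in nth fset0 L p by apply/fset0Pn.
have [a [b [hc _]]] := comp_exists _ _ hx.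
rewrite vecDeltaE (bigD1_seq p) ?mem_iota ?iota_uniq //=.
rewrite hU; apply: (leq_trans _ (leq_addr _ _)); exact: Delta_ge _ _ (ominus0_comp _ _ _ hc).
Qed.

Definition sI (I : seq nat) := sort leq (undup I).

Lemma sI_props m I : valid_I m I ->
  [/\ sorted ltn (sI I), forall x, x \in sI I -> (1 <= x <= m)%N & m \in sI I].
Proof.
case=> hsub hm; split.
- rewrite ltn_sorted_uniq_leq sort_uniq undup_uniq /=.
  exact: (sort_sorted leq_total).
- by move=> x; rewrite mem_sort mem_undup => /hsub; rewrite /irangeN mem_iota; lia.
- by rewrite mem_sort mem_undup.
Qed.

Lemma sigmaI_sig I j : (0 < j)%N -> sigmaI I j = sig (sI I) j.
Proof.
case: j => // j _; rewrite /sigmaI /sig -/(sI I) -pred_Sn.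
Qed.

Section Reorder.
Variable Gs : seq {fset int}.

Lemma take_reorder sigma n : (n <= size Gs)%N ->
  take n (reorder Gs sigma) = [seq nth fset0 Gs (sigma j).-1 | j <- iota 1 n].
Proof.
move=> hn; rewrite /reorder /irangeN -map_take take_iota.
have -> : minn n (size Gs) = n by lia.
by [].
Qed.

Lemma union_take sigma n : (n <= size Gs)%N ->
  (forall j, (1 <= j <= n)%N -> (1 <= sigma j <= n)%N) ->
  (forall u, (1 <= u <= n)%N -> exists j, (1 <= j <= n)%N /\ sigma j = u) ->
  gunion (take n (reorder Gs sigma)) = gunion (take n Gs).
Proof.
move=> hn h1 h2; apply/fsetP => e; rewrite take_reorder // !in_gunion has_map.
apply/seq.hasP/seq.hasP => /=.
- move=> [j]; rewrite mem_iota => hj he.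
  have hs := h1 j ltac:(lia).
  exists (nth fset0 Gs (sigma j).-1) => //.
  have hlt : ((sigma j).-1 < n)%N by lia.
  rewrite -(nth_take _ hlt); apply: mem_nth; rewrite size_takel //.
- move=> [G hG he].
  set i := index G (take n Gs).
  have hi : (i < n)%N.
    by have := index_mem G (take n Gs); rewrite hG size_takel.
  have [j [hj hsj]] := h2 i.+1 ltac:(lia).
  exists j; first by rewrite mem_iota; lia.
  by rewrite /= hsj /= -(nth_take _ hi) nth_index.
Qed.

Lemma reorder_union I n : valid_I (size Gs) I -> n \in (0%N :: sI I) ->
  gunion (take n (reorder Gs (sigmaI I))) = gunion (take n Gs).
Proof.
move=> hv hn; have [hs hsub hm] := sI_props _ _ hv.
have hnm : (n <= size Gs)%N.
  by move: hn; rewrite inE => /orP[/eqP -> //|/hsub]; lia.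
apply: union_take => //.
- move=> j hj; rewrite sigmaI_sig; last by lia.
  have [h1 _ h3] := @sig1 _ _ hs hsub hm j ltac:(lia).
  have := h3 n hn ltac:(lia); lia.
- move=> u hu; have [j [hj e]] := @sig2 _ _ hs hsub hm n u hn hu.
  by exists j; split => //; rewrite sigmaI_sig //; lia.
Qed.

Lemma reorder_size sigma : size (reorder Gs sigma) = size Gs.
Proof. by rewrite /reorder size_map /irangeN size_iota. Qed.

Lemma reorder_gunion I : valid_I (size Gs) I ->
  gunion (reorder Gs (sigmaI I)) = gunion Gs.
Proof.
move=> hv; have [_ _ hm] := sI_props _ _ hv.
rewrite -{1}(take_size (reorder _ _)) reorder_size reorder_union //.
  by rewrite take_size.
by rewrite inE hm orbT.
Qed.

Lemma shift_perm I : valid_I (size Gs) I -> is_shift_perm (size Gs) (sigmaI I).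
Proof.
move=> hv; have [hs hsub hm] := sI_props _ _ hv.
have hm' : size Gs \in 0%N :: sI I by rewrite inE hm orbT.
split.
- move=> j; rewrite /irangeN mem_iota => hj; rewrite sigmaI_sig; last by lia.
  have [h1 _ _] := @sig1 _ _ hs hsub hm j ltac:(lia).
  rewrite mem_iota; lia.
- apply: uniq_map_inj; apply: (@leq_size_uniq _ (irangeN (size Gs))).
  + exact: iota_uniq.
  + move=> u; rewrite /irangeN mem_iota => hu.
    have [j [hj e]] := @sig2 _ _ hs hsub hm (size Gs) u hm' ltac:(lia).
    apply/mapP; exists j; first by rewrite mem_iota; lia.
    by rewrite sigmaI_sig // ?e //; lia.
  + by rewrite size_map.
- move=> j; rewrite /irangeN mem_iota => hj; rewrite sigmaI_sig; last by lia.
  by have [_ h2 _] := @sig1 _ _ hs hsub hm j ltac:(lia).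
Qed.
End Reorder.

Lemma path_zip (R : rel nat) x s : path R x s ->
  forall p, p \in zip (x :: s) s -> R p.1 p.2.
Proof.
elim: s x => //= y s IH x /andP[hxy hp] p; rewrite inE => /orP[/eqP -> //|].
exact: IH.
Qed.

Lemma zip_nth (x : nat) s p : p \in zip (x :: s) s ->
  exists h, (h < size s)%N /\ p = (nth 0%N (x :: s) h, nth 0%N s h).
Proof.
elim: s x => //= y s IH x; rewrite inE => /orP[/eqP ->|hp].
- by exists 0%N.
- have [h [hh ->]] := IH y hp; by exists h.+1.
Qed.

Lemma unzip1_belast (x : nat) s : unzip1 (zip (x :: s) s) = belast x s.
Proof. by elim: s x => //= y s IH x; rewrite IH. Qed.

Section Gain.
Variable Gs : seq {fset int}.

Lemma gain I (g : nat -> nat) : valid_I (size Gs) I ->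
  path (fun a b => (a < b)%N &&
     (g b <= lambda (ominus (nth fset0 Gs b.-1) (gunion (take a Gs))))%N) 0%N (sI I) ->
  (\sum_(b <- sI I) g b <= vecLambda (reorder Gs (sigmaI I)))%N.
Proof.
move=> hv hp; have [hs hsub hm] := sI_props _ _ hv.
set s := sI I; set r := reorder Gs (sigmaI I).
have hsr : size r = size Gs by rewrite reorder_size.
set Fl := fun l => lambda (ominus (nth fset0 r l) (gunion (take l r))).
have -> : vecLambda r = (\sum_(l <- iota 0 (size Gs)) Fl l)%N.
  by rewrite /vecLambda /Hs big_map hsr.
have hz : unzip2 (zip (0%N :: s) s) = s by rewrite unzip2_zip //= leqnSn.
rewrite -{1}hz big_map.
apply: (@leq_trans (\sum_(p <- zip (0%N :: s) s) Fl p.1)%N).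
  rewrite big_seq_cond [X in (_ <= X)%N]big_seq_cond; apply: leq_sum => p /andP[hpz _].
  have /andP[hab hg] := path_zip _ _ _ hp _ hpz.
  have [h [hh ep]] := zip_nth _ _ _ hpz.
  have hp1 : p.1 \in 0%N :: s by rewrite ep mem_nth //= ltnS ltnW.
  have hp2 : p.2 \in s by rewrite ep mem_nth.
  have := hsub _ hp2 => hp2m.
  have hp1m : (p.1 < size Gs)%N by lia.
  rewrite /Fl (reorder_union _ _ _ hv hp1).
  have -> : nth fset0 r p.1 = nth fset0 Gs (p.2).-1.
    rewrite /r /reorder (nth_map 0%N) ?size_iota // nth_iota // add1n sigmaI_sig //.
    by rewrite ep /= (@sig3 _ _ hs hsub).
  exact: hg.
rewrite -(big_map fst xpredT Fl).
have -> : [seq i.1 | i <- zip (0%N :: s) s] = belast 0%N s := unzip1_belast 0%N s.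
have hu : uniq (0%N :: s).
  by have := (@ht _ _ hs hsub); rewrite ltn_sorted_uniq_leq => /andP[].
apply: sum_sub.
- by move: hu; rewrite lastI rcons_uniq => /andP[].
- move=> a; rewrite -(unzip1_belast 0%N s) => /mapP[[a' b'] hpz ->] /=.
  have /andP[/= hab _] := path_zip _ _ _ hp _ hpz.
  have [h [hh [_ ep]]] := zip_nth _ _ _ hpz.
  have hp2 : b' \in s by rewrite ep mem_nth.
  have := hsub _ hp2; rewrite mem_iota add0n => h2; lia.
- exact: iota_uniq.
Qed.
End Gain.

Section Chain.
Variable Gs : seq {fset int}.

Lemma chain_to_I (phi : int -> int) (Y P : nat -> int) (C : seq nat) :
  (0 < size Gs)%N ->
  sorted (R0 P Y) C -> (forall t, t \in C -> (t < size Gs)%N) ->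
  (forall t e, t \in C -> e \in gunion (take t.+1 Gs) -> phi e <= Y t) ->
  (forall t (F : {fset int}), (t < size Gs)%N -> (forall e, e \in F -> phi e + 2 <= P t) ->
      (absz (Y t - P t + 1)%R <= lambda (ominus (nth fset0 Gs t) F))%N) ->
  exists I, valid_I (size Gs) I /\
    (\sum_(c <- C) absz (Y c - P c + 1)%R <= vecLambda (reorder Gs (sigmaI I)))%N.
Proof.
move=> hm0 hC hCm hY hgain.
have hs1 : sorted ltn (map S C).
  by rewrite sorted_map; apply: sub_sorted hC => a b /andP[h _].
have hs1m : forall x, x \in map S C -> (1 <= x <= size Gs)%N.
  by move=> x /mapP[t ht ->]; have := hCm _ ht; lia.
pose g b := if b \in map S C then absz (Y b.-1 - P b.-1 + 1)%R else 0%N.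
pose R := fun a b => (a < b)%N &&
  (g b <= lambda (ominus (nth fset0 Gs b.-1) (gunion (take a Gs))))%N.
have hpath1 : path R 0%N (map S C).
  case hCe: C => [|c C'] //=.
  have hcC : c \in C by rewrite hCe inE eqxx.
  apply/andP; split.
    rewrite /R /g /= map_f //=; apply: hgain; first exact: hCm.
    by move=> e; rewrite take0 in_gunion.
  rewrite path_map; apply: (@sub_in_path _ (mem C) (R0 P Y)).
  - move=> a b ha hb /andP[hab hPY]; rewrite /R /= ltnS hab /g map_f //=.
    apply: hgain; first exact: hCm.
    by move=> e he; have := hY a e ha he; lia.
  - by rewrite -hCe allss.
  - by move: hC; rewrite hCe.
pose I := if size Gs \in map S C then map S C else rcons (map S C) (size Gs).
have hI : [/\ sorted ltn I, forall x, x \in I -> (1 <= x <= size Gs)%N,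
    size Gs \in I & path R 0%N I].
  rewrite /I; case: ifP => hmin; first by split.
  have hlast : forall y s', y :: s' = map S C -> (last y s' < size Gs)%N.
    move=> y s' e.
    have hl : last y s' \in map S C by rewrite -e mem_last.
    have := hs1m _ hl => h; have : last y s' != size Gs.
      by apply/eqP => el; move: hmin; rewrite -el hl.
    lia.
  split.
  - case e: (map S C) => [|y s'] //=; rewrite rcons_path; apply/andP; split.
      by move: hs1; rewrite e.
    exact: hlast.
  - move=> x; rewrite mem_rcons inE => /orP[/eqP ->|/hs1m //]; lia.
  - by rewrite mem_rcons inE eqxx.
  - rewrite rcons_path hpath1 /= /R /g hmin /= andbT.
    case e: (map S C) => [|y s'] //=; exact: hlast.
case: hI => hIs hIm hmI hIp.
have hsI : sI I = I.
  rewrite /sI undup_id; last by move: hIs; rewrite ltn_sorted_uniq_leq => /andP[].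
  apply: (sorted_sort leq_trans).
  by move: hIs; rewrite ltn_sorted_uniq_leq => /andP[].
have hv : valid_I (size Gs) I.
  split => // x /hIm; rewrite /irangeN mem_iota; lia.
exists I; split => //.
have := gain Gs I g hv; rewrite hsI => /(_ hIp).
apply: leq_trans.
have -> : (\sum_(c <- C) absz (Y c - P c + 1)%R = \sum_(b <- map S C) g b)%N.
  rewrite big_map; apply: eq_big_seq => c hc.
  by rewrite /g map_f.
rewrite /I; case: ifP => hmin //.
by rewrite big_rcons /g hmin Monoid.mulm1.
Qed.
End Chain.

Lemma seq_max (s : seq int) : s != [::] ->
  exists y, (y \in s) && all (fun e => e <= y) s.
Proof.
elim: s => // x s IH _; case: (eqVneq s [::]) => [->|hs].
  by exists x; rewrite /= inE eqxx /= lexx.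
have [y /andP[hy hall]] := IH hs.
case: (lerP x y) => hxy.
- by exists y; rewrite /= inE hy orbT hxy hall.
- exists x; rewrite /= inE eqxx lexx /=; apply/allP => e /(allP hall); lia.
Qed.

Lemma seq_min (s : seq int) : s != [::] ->
  exists y, (y \in s) && all (fun e => y <= e) s.
Proof.
elim: s => // x s IH _; case: (eqVneq s [::]) => [->|hs].
  by exists x; rewrite /= inE eqxx /= lexx.
have [y /andP[hy hall]] := IH hs.
case: (lerP y x) => hxy.
- by exists y; rewrite /= inE hy orbT hxy hall.
- exists x; rewrite /= inE eqxx lexx /=; apply/allP => e /(allP hall); lia.
Qed.

Lemma fset_ne (A : {fset int}) : A != fset0 -> enum_fset A != [::].
Proof. apply: contra => /eqP h; apply/eqP/fsetP => x; by rewrite inE -[x \in A]/(x \in enum_fset A) h. Qed.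

Lemma path_iota (R : rel nat) a n :
  (forall t, (a <= t)%N -> (t < a + n)%N -> R t t.+1) -> path R a (iota a.+1 n).
Proof.
elim: n a => [|n IH] a h //=; apply/andP; split.
  by apply: h => //; lia.
apply: IH => t h1 h2; apply: h; lia.
Qed.

Lemma last_iota a n : last a (iota a.+1 n) = (a + n)%N.
Proof. by elim: n a => [|n IH] a /=; [rewrite addn0 | rewrite IH addSnnS]. Qed.

Lemma sum_absz (C : seq nat) (f : nat -> int) : (forall c, c \in C -> 0 <= f c) ->
  ((\sum_(c <- C) absz (f c))%N)%:Z = \sum_(c <- C) f c.
Proof.
elim: C => [|c C IH] h; first by rewrite !big_nil.
rewrite !big_cons PoszD IH; last by move=> x hx; apply: h; rewrite inE hx orbT.
have := h c; rewrite inE eqxx => /(_ isT) hc; by rewrite abszE ger0_norm.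
Qed.

Lemma tilde_valid m I j : valid_I m I -> j \in irangeN m -> valid_I m (tildeI I j).
Proof.
case=> hsub hm; rewrite /irangeN mem_iota => hj.
have [hs hsub' hm'] := sI_props m I (conj hsub hm).
rewrite /tildeI -/(sI I); case: ifP => _; split; rewrite ?mem_cat ?hm //.
- move=> x; rewrite mem_cat => /orP[/hsub //|]; rewrite /irangeN !mem_iota.
  set i := index j (sI I).
  have : (nth 0%N (0%N :: sI I) i <= m)%N.
    case: i => [|i] //=.
    case: (ltnP i (size (sI I))) => hi; last by rewrite nth_default.
    by move: (hsub' _ (mem_nth 0%N hi)) => /andP[].
  lia.
- move=> x; rewrite mem_cat => /orP[/hsub //|]; rewrite /irangeN !mem_iota; lia.
Qed.

Lemma first_ne (L : seq {fset int}) p :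
  (forall q, (q < p)%N -> nth fset0 L q = fset0) -> gunion (take p L) = fset0.
Proof.
move=> h; apply/fsetP => x; rewrite in_gunion inE; apply/seq.hasP => -[G hG hxG].
have hi : (index G (take p L) < size (take p L))%N by rewrite index_mem.
have hi' : (index G (take p L) < p)%N.
  by move: hi; rewrite size_take_min; lia.
have eG : G = nth fset0 L (index G (take p L)) by rewrite -(nth_take _ hi') nth_index.
by move: hxG; rewrite eG h // inE.
Qed.

Lemma mem_PathG (k : nat) (e : int) : e \in PathG k = (1 <= e <= k%:Z).
Proof. rewrite /PathG. apply/imfsetP/idP => /=.
- move=> [x]; rewrite mem_iota => /andP[h1 h2] ->. lia.
- move=> h. exists (absz e); rewrite ?mem_iota; lia.
Qed.

Lemma finish (k : nat) (Gs : seq pgraph) I :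
  (0 < k)%N -> gunion Gs = PathG k -> vecDelta Gs = 1%N -> valid_I (size Gs) I ->
  (k.+1 <= 4 * vecLambda (reorder Gs (sigmaI I)))%N ->
  exists sigma : nat -> nat,
    is_shift_perm (size Gs) sigma /\
    exists I : seq nat,
      [/\ valid_I (size Gs) I,
          {in irangeN (size Gs), sigma =1 sigmaI I},
          ((vecLambda (reorder Gs sigma))%:R : rat)
             >= k%:R / 8%:R - (\max_(G <- Gs) lambda G)%:R / 2%:R
        & forall j, j \in irangeN (size Gs) ->
            ((vecDelta (reorder Gs (sigmaI (tildeI I j))))%:R : rat)
              >= (vecDelta Gs)%:R / 2%:R].
Proof.
move=> hk hU hD hv h4.
exists (sigmaI I); split; first exact: shift_perm.
exists I; split => //.
- have : (k.+1%:R : rat) <= 4 * (vecLambda (reorder Gs (sigmaI I)))%:R.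
    by rewrite -natrM ler_nat.
  have : (0 : rat) <= (\max_(G <- Gs) lambda G)%:R by rewrite ler0n.
  have : (0 : rat) <= (vecLambda (reorder Gs (sigmaI I)))%:R by rewrite ler0n.
  rewrite -natr1 => h0 h1 h2. lra.
- move=> j hj; rewrite hD.
  have hv' := tilde_valid _ _ _ hv hj.
  have hpos : (0 < vecDelta (reorder Gs (sigmaI (tildeI I j))))%N.
    apply: (@vecDelta_pos _ 1); rewrite reorder_gunion // hU mem_PathG; lia.
  have : (1 : rat) <= (vecDelta (reorder Gs (sigmaI (tildeI I j))))%:R by rewrite ler1n.
  move=> h; lra.
Qed.

Theorem lemma5p6 (k : nat) (Gs : seq pgraph) :
  (0 < k)%N ->
  gunion Gs = PathG k ->
  vecDelta Gs = 1%N ->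
  exists sigma : nat -> nat,
    is_shift_perm (size Gs) sigma /\
    exists I : seq nat,
      [/\ valid_I (size Gs) I,
          {in irangeN (size Gs), sigma =1 sigmaI I},
          ((vecLambda (reorder Gs sigma))%:R : rat)
             >= k%:R / 8%:R - (\max_(G <- Gs) lambda G)%:R / 2%:R
        & forall j, j \in irangeN (size Gs) ->
            ((vecDelta (reorder Gs (sigmaI (tildeI I j))))%:R : rat)
              >= (vecDelta Gs)%:R / 2%:R].
Proof.
move=> hk hU hD.
set m := size Gs.
pose G i : {fset int} := nth fset0 Gs i.
pose U n : {fset int} := gunion (take n Gs).
have hUS : forall n e, (n < m)%N -> (e \in U n.+1) = (e \in U n) || (e \in G n).
  by move=> n e hn; rewrite /U (take_nth fset0 hn) !in_gunion has_rcons orbC.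
have hUtake : forall n e, e \in U n -> e \in gunion Gs.
  move=> n e; rewrite /U !in_gunion => /seq.hasP[H hH he]; apply/seq.hasP; exists H => //.
  exact: mem_take hH.
have hUk : forall n e, e \in U n -> 1 <= e <= k%:Z.
  by move=> n e /hUtake; rewrite hU mem_PathG.
have hGU : forall i e, e \in G i -> e \in U i.+1.
  move=> i e he; case: (ltnP i m) => hi; first by rewrite hUS // he orbT.
  by move: he; rewrite /G nth_default // inE.
have hUmono : forall n n' e, (n <= n')%N -> e \in U n -> e \in U n'.
  move=> n n' e hnn; rewrite /U !in_gunion => /seq.hasP[H hH he]; apply/seq.hasP.
  by exists H => //; move: hH; rewrite -(take_takel _ hnn) => /mem_take.
have hUm : U m = PathG k by rewrite /U take_size.
have hex : exists p, (p < m)%N && (G p != fset0).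
  have : (1 : int) \in gunion Gs by rewrite hU mem_PathG; lia.
  rewrite in_gunion => /seq.hasP[H hH he].
  exists (index H Gs); rewrite index_mem hH /G nth_index //=.
  by apply/fset0Pn; exists 1.
pose l0 := ex_minn hex.
have [hl0m hl0ne hl0min] : [/\ (l0 < m)%N, G l0 != fset0 &
    forall q, (q < l0)%N -> G q = fset0].
  rewrite /l0; case: ex_minnP => p /andP[h1 h2] hmin; split => // q hq.
  case: (ltnP q m) => hqm; last by rewrite /G nth_default.
  apply/eqP; apply: contraTT hq => hne; rewrite -leqNgt; apply: hmin.
  by rewrite hqm hne.
have hUl0 : U l0 = fset0 by apply: first_ne.
pose Dl i := Delta (ominus (G i) (U i)).
have hsum : (\sum_(i <- iota 0 m) Dl i)%N = 1%N by rewrite -hD vecDeltaE.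
have hDl0 : (0 < Dl l0)%N.
  have [x hx] : exists x, x \in G l0 by apply/fset0Pn.
  have [a [b [hc _]]] := comp_exists _ _ hx.
  rewrite /Dl hUl0; exact: Delta_ge _ _ (ominus0_comp _ _ _ hc).
have hsplit := hsum; rewrite (bigD1_seq l0) ?mem_iota ?iota_uniq //= in hsplit.
have hDl0eq : Dl l0 = 1%N by move: hsplit hDl0; lia.
have hDother : forall i, (i < m)%N -> i != l0 -> Dl i = 0%N.
  move=> i hi hne.
  have : (Dl i <= \sum_(j <- iota 0 m | j != l0) Dl j)%N.
    rewrite -big_filter; apply: sum_ge_term.
      by rewrite mem_filter hne mem_iota /=; lia.
    by rewrite filter_uniq ?iota_uniq.
  by move: hsplit; lia.
have htouch : forall i a b, (i < m)%N -> i != l0 -> is_comp (G i) a b -> shares (U i) a b.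
  move=> i a b hi hne hc; apply/negPn/negP => hns.
  have := Delta_ge _ _ (comp_ominus _ _ _ _ hc hns).
  move=> h; have : (0 < Dl i)%N := h.
  by rewrite hDother.
have huniq : forall a b a' b', is_comp (G l0) a b -> is_comp (G l0) a' b' -> a = a' /\ b = b'.
  move=> a b a' b' h1 h2.
  have m1 : (a, b) \in comps (ominus (G l0) (U l0)) by rewrite hUl0; exact: ominus0_comp.
  have m2 : (a', b') \in comps (ominus (G l0) (U l0)) by rewrite hUl0; exact: ominus0_comp.
  move: hDl0eq m1 m2; rewrite /Dl /Delta; case: (comps _) => [|p [|q r]] //= _.
  rewrite !inE => /eqP e1 /eqP e2; move: e1; rewrite -e2 => -[-> ->]; by [].
have hUne : forall t, (l0 <= t)%N -> U t.+1 != fset0.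
  move=> t ht; have [x hx] : exists x, x \in G l0 by apply/fset0Pn.
  apply/fset0Pn; exists x; apply: (hUmono l0.+1) => //; exact: hGU.
have exY : forall n, exists y, (U n == fset0) ||
    ((y \in U n) && all (fun e => e <= y) (enum_fset (U n))).
  move=> n; case: (eqVneq (U n) fset0) => [->|hne]; first by exists 0.
  by have [y hy] := seq_max _ (fset_ne _ hne); exists y; rewrite hy orbT.
pose Ymx n := xchoose (exY n).
have hYmx : forall n, U n != fset0 -> Ymx n \in U n /\ forall e, e \in U n -> e <= Ymx n.
  move=> n hne; have := xchooseP (exY n) => /orP[/eqP h|/andP[h1 /allP h2]].
    by move: hne; rewrite h eqxx.
  by split => // e he; exact: h2.
pose Y t := Ymx t.+1.
have hYY : forall t, U t.+1 != fset0 -> Y t \in U t.+1 /\ forall e, e \in U t.+1 -> e <= Y t.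
  by move=> t; exact: hYmx t.+1.
have exP : forall t, exists p, if Y t \in G t then is_comp (G t) p (Y t) else p == Y t + 1.
  move=> t; case hin: (Y t \in G t); last by exists (Y t + 1).
  have hne : U t.+1 != fset0 by apply/fset0Pn; exists (Y t); apply: hGU.
  have [_ hmax] := hYY _ hne.
  have [a [b [hc hab]]] := comp_exists _ _ hin.
  have hb : b \in G t by case/is_compP: hc => hab' hall _ _; apply: hall; lia.
  have := hmax b (hGU _ _ hb) => hbY.
  have eb : b = Y t by lia.
  by exists a; rewrite -eb.
pose Pf t := xchoose (exP t).
have hPf : forall t, if Y t \in G t then is_comp (G t) (Pf t) (Y t) else Pf t == Y t + 1.
  by move=> t; exact: (xchooseP (exP t)).
have hPle : forall t, Pf t <= Y t + 1.
  move=> t; have := hPf t; case: ifP => _; last by move/eqP ->.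
  by case/is_compP => h _ _ _; lia.
have hpathR : path (Rc Pf Y) l0 (iota l0.+1 (m - l0.+1)).
  apply: path_iota => t h1 h2; rewrite /Rc ltnSn /=.
  have htm : (t.+1 < m)%N by lia.
  have [hYt hmaxt] := hYY _ (hUne t h1).
  have := hPf t.+1; case: ifP => hin.
  - move=> hc; have hab : Pf t.+1 <= Y t.+1 by case/is_compP: hc.
    have hne : t.+1 != l0 by apply/eqP => e; move: h1; rewrite -e; lia.
    have [e he hr] := sharesE _ _ _ hab (htouch _ _ _ htm hne hc).
    have := hmaxt e he; lia.
  - move=> /eqP ->.
    have [hYt1 _] := hYY _ (hUne t.+1 (leqW h1)).
    move: hYt1; rewrite hUS // hin orbF => /hmaxt; lia.
have hm0 : (0 < size Gs)%N by rewrite -/m; lia.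
have hne_m : U m != fset0 by rewrite hUm; apply/fset0Pn; exists 1; rewrite mem_PathG; lia.
have em : m.-1.+1 = m by lia.
have hlast : last l0 (iota l0.+1 (m - l0.+1)) = m.-1 by rewrite last_iota; lia.
have hYk : Y m.-1 = k%:Z.
  have [h1 h2] := hYY m.-1 (ltac:(by rewrite em)).
  move: h1 h2; rewrite em hUm mem_PathG => h1 h2.
  have := h2 k%:Z; rewrite mem_PathG => /(_ ltac:(lia)); lia.
have [C [hCs hCsub hCsum]] := icover Pf Y l0 (iota l0.+1 (m - l0.+1)) hpathR.
have hCm : forall t, t \in C -> (l0 <= t < m)%N.
  move=> t /hCsub; rewrite inE mem_iota => /orP[/eqP ->|]; lia.
have [IR [hvR hR]] : exists I, valid_I (size Gs) I /\
    (\sum_(c <- C) absz (Y c - Pf c + 1)%R <= vecLambda (reorder Gs (sigmaI I)))%N.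
  apply: (chain_to_I Gs id Y Pf C hm0 hCs).
  - by move=> t /hCm /andP[_ h].
  - move=> t e ht he; have [_ h] := hYY t (hUne t ltac:(by have := hCm t ht; lia)).
    exact: h.
  - move=> t F ht hF; have := hPf t; case: ifP => hin.
    + move=> hc; have hab : Pf t <= Y t by case/is_compP: hc.
      have hns : ~~ shares F (Pf t) (Y t).
        by apply: noshares => // e he; have := hF e he; rewrite /=; lia.
      have := lambda_ge _ _ (comp_ominus _ _ _ _ hc hns); rewrite /comp_size /= => h.
      apply: (leq_trans _ h); lia.
    + by move=> /eqP ->; have -> : Y t - (Y t + 1) + 1 = 0 by lia.
have hgR : gsum Pf Y C = (\sum_(c <- C) absz (Y c - Pf c + 1)%R)%N%:Z.
  rewrite sum_absz //; move=> c _; have := hPle c; lia.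
have exYm : forall n, exists y, (U n == fset0) ||
    ((y \in U n) && all (fun e => y <= e) (enum_fset (U n))).
  move=> n; case: (eqVneq (U n) fset0) => [->|hne]; first by exists 0.
  by have [y hy] := seq_min _ (fset_ne _ hne); exists y; rewrite hy orbT.
pose Ymn n := xchoose (exYm n).
have hYmn : forall n, U n != fset0 -> Ymn n \in U n /\ forall e, e \in U n -> Ymn n <= e.
  move=> n hne; have := xchooseP (exYm n) => /orP[/eqP h|/andP[h1 /allP h2]].
    by move: hne; rewrite h eqxx.
  by split => // e he; exact: h2.
pose Ym t := Ymn t.+1.
have hYM : forall t, U t.+1 != fset0 -> Ym t \in U t.+1 /\ forall e, e \in U t.+1 -> Ym t <= e.
  by move=> t; exact: hYmn t.+1.
have exQ : forall t, exists q, if Ym t \in G t then is_comp (G t) (Ym t) q else q == Ym t - 1.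
  move=> t; case hin: (Ym t \in G t); last by exists (Ym t - 1).
  have hne : U t.+1 != fset0 by apply/fset0Pn; exists (Ym t); apply: hGU.
  have [_ hmin] := hYM _ hne.
  have [a [b [hc hab]]] := comp_exists _ _ hin.
  have ha : a \in G t by case/is_compP: hc => hab' hall _ _; apply: hall; lia.
  have := hmin a (hGU _ _ ha) => haY.
  have ea : a = Ym t by lia.
  by exists b; rewrite -ea.
pose Qf t := xchoose (exQ t).
have hQf : forall t, if Ym t \in G t then is_comp (G t) (Ym t) (Qf t) else Qf t == Ym t - 1.
  by move=> t; exact: (xchooseP (exQ t)).
have hQge : forall t, Ym t - 1 <= Qf t.
  move=> t; have := hQf t; case: ifP => _; last by move/eqP ->.
  by case/is_compP => h _ _ _; lia.
pose Y' t := - Ym t.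
pose P' t := - Qf t.
have hpathL : path (Rc P' Y') l0 (iota l0.+1 (m - l0.+1)).
  apply: path_iota => t h1 h2; rewrite /Rc ltnSn /= /P' /Y'.
  have htm : (t.+1 < m)%N by lia.
  have [hYt hmint] := hYM _ (hUne t h1).
  have := hQf t.+1; case: ifP => hin.
  - move=> hc; have hab : Ym t.+1 <= Qf t.+1 by case/is_compP: hc.
    have hne : t.+1 != l0 by apply/eqP => e; move: h1; rewrite -e; lia.
    have [e he hr] := sharesE _ _ _ hab (htouch _ _ _ htm hne hc).
    have := hmint e he; lia.
  - move=> /eqP ->.
    have [hYt1 _] := hYM _ (hUne t.+1 (leqW h1)).
    move: hYt1; rewrite hUS // hin orbF => /hmint; lia.
have hYk' : Ym m.-1 = 1.
  have [h1 h2] := hYM m.-1 (ltac:(by rewrite em)).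
  move: h1 h2; rewrite em hUm mem_PathG => h1 h2.
  have := h2 1; rewrite mem_PathG => /(_ ltac:(lia)); lia.
have [C' [hCs' hCsub' hCsum']] := icover P' Y' l0 (iota l0.+1 (m - l0.+1)) hpathL.
have hCm' : forall t, t \in C' -> (l0 <= t < m)%N.
  move=> t /hCsub'; rewrite inE mem_iota => /orP[/eqP ->|]; lia.
have [IL [hvL hL]] : exists I, valid_I (size Gs) I /\
    (\sum_(c <- C') absz (Y' c - P' c + 1)%R <= vecLambda (reorder Gs (sigmaI I)))%N.
  apply: (chain_to_I Gs (fun e => - e) Y' P' C' hm0 hCs').
  - by move=> t /hCm' /andP[_ h].
  - move=> t e ht he; have [_ h] := hYM t (hUne t ltac:(by have := hCm' t ht; lia)).
    rewrite /Y'; have := h e he; lia.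
  - move=> t F ht hF; have := hQf t; case: ifP => hin.
    + move=> hc; have hab : Ym t <= Qf t by case/is_compP: hc.
      have hns : ~~ shares F (Ym t) (Qf t).
        by apply: noshares => // e he; have := hF e he; rewrite /P' /=; lia.
      have := lambda_ge _ _ (comp_ominus _ _ _ _ hc hns); rewrite /comp_size /= => h.
      apply: (leq_trans _ h); rewrite /Y' /P'; lia.
    + by move=> /eqP hq; rewrite /Y' /P' hq; have -> : - Ym t - - (Ym t - 1) + 1 = 0 by lia.
have hgL : gsum P' Y' C' = (\sum_(c <- C') absz (Y' c - P' c + 1)%R)%N%:Z.
  rewrite sum_absz //; move=> c _; have := hQge c; rewrite /Y' /P'; lia.
have hYl0 : Y l0 \in G l0.
  have [h _] := hYY l0 (hUne l0 (leqnn _)).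
  by move: h; rewrite hUS // hUl0 inE.
have hYml0 : Ym l0 \in G l0.
  have [h _] := hYM l0 (hUne l0 (leqnn _)).
  by move: h; rewrite hUS // hUl0 inE.
have hc1 : is_comp (G l0) (Pf l0) (Y l0) by have := hPf l0; rewrite hYl0.
have hc2 : is_comp (G l0) (Ym l0) (Qf l0) by have := hQf l0; rewrite hYml0.
have [e1 e2] := huniq _ _ _ _ hc1 hc2.
have hle : Ym l0 <= Qf l0 by case/is_compP: hc2.
move: hCsum hCsum'; rewrite hlast hgR hgL /P' /Y' hYk' hYk => hs1 hs2.
set gR := (\sum_(c <- C) _)%N in hR hs1.
set gL := (\sum_(c <- C') _)%N in hL hs2.
case: (leqP gL gR) => hLR.
- apply: (finish k Gs IR hk hU hD hvR); lia.
- apply: (finish k Gs IL hk hU hD hvL); lia.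
Qed.
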